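(* Let $\bar{\mathcal{L}}$ be the Laplacian of an undirected connected graph on $N\ge2$ nodes, let $\eta\ge0$, $\gamma\in\mathbb{R}$, and let $\bar P\in\mathbb{R}^{Nn\times Nn}$, $Q\in\mathbb{R}^{n\times n}$, $R\in\mathbb{R}^{m\times m}$ be symmetric positive definite. Consider the error dynamics when all agents are connected, $$\dot e(t)=\big(\bar F-\eta(\bar{\mathcal{L}}\otimes I_n)\big)e(t)+\mathcal{I}w(t)-\bar Jv(t),\qquad w(t)^TQw(t)\le1,\ v(t)^TRv(t)\le1.$$ If there exists $\alpha_3\ge0$ such that, with $M=\bar E^T\bar P\bar E$, $$\begin{bmatrix}(\gamma-2\alpha_3)M-\bar A_e^TM-M\bar A_e & -M\bar W & M\bar V\\ -\bar W^TM & \alpha_3Q & 0\\ \bar V^TM & 0 & \alpha_3R\end{bmatrix}\succ0,$$ then this error system is quadratically $\gamma$-bounded with Lyapunov matrix $\bar P$, i.e. whenever $w(t)^TQw(t)\le1$, $v(t)^TRv(t)\le1$ and $e(t)^T\bar Pe(t)\ge1$, one has $\frac{d}{dt}(e(t)^T\bar Pe(t))<\gamma\, e(t)^T\bar Pe(t)$.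
   Context: Data: $A\in\mathbb{R}^{n\times n}$; $B=[B_1\ \cdots\ B_N]$, $B_i\in\mathbb{R}^{n\times p_i}$; $K_i\in\mathbb{R}^{p_i\times n}$, $K=[K_1^T\cdots K_N^T]^T$; $A_{bk}=A+BK$; $C=[C_1^T\cdots C_N^T]^T$, $C_i\in\mathbb{R}^{m_i\times n}$, $m=\sum_im_i$; $L_i\in\mathbb{R}^{n\times m_i}$, $L=[L_1\ \cdots\ L_N]$. Define $\mathcal{I}=[I_n\ \cdots\ I_n]^T\in\mathbb{R}^{Nn\times n}$; $\bar J=N\,\mathrm{BlkDiag}(L_1,\dots,L_N)$; $\bar F$ the $N\times N$ block matrix with $(i,i)$ block $A_{bk}-NL_iC_i-B_iK_i$ and $(i,j)$ block $-B_jK_j$ for $i\ne j$; $H=[\tfrac1NA_{bk}-B_1K_1-L_1C_1\ \cdots\ \tfrac1NA_{bk}-B_NK_N-L_NC_N]\in\mathbb{R}^{n\times Nn}$. Let $S\in\mathbb{R}^{N\times(N-1)}$ satisfy $1_N^TS=0$, $S^TS=I_{N-1}$, $S^T\bar{\mathcal{L}}S=\Lambda^+$, where $\Lambda^+$ is the diagonal matrix of the positive eigenvalues of $\bar{\mathcal{L}}$ ($1_N$ is the all-ones vector). Set $\bar E=[\mathcal{I}\ \ S\otimes I_n]$, $$\bar A_e=\begin{bmatrix}A-LC & H(S\otimes I_n)\\ (S^T\otimes I_n)\bar F\mathcal{I} & (S^T\otimes I_n)\bar F(S\otimes I_n)-\eta(\Lambda^+\otimes I_n)\end{bmatrix},\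 \bar W=\begin{bmatrix}I_n\\(S^T\otimes I_n)\mathcal{I}\end{bmatrix},\ \bar V=\begin{bmatrix}L\\(S^T\otimes I_n)\bar J\end{bmatrix}.$$ *)

(* Defs.v *)
From HB Require Import structures.
From mathcomp Require Import all_boot all_order all_algebra.
Set Implicit Arguments. Unset Strict Implicit. Unset Printing Implicit Defensive.
Import Order.TTheory GRing.Theory Num.Theory.
Local Open Scope ring_scope.

Section Defs.
Variable R : realFieldType.

Definition posdef (k : nat) (X : 'M[R]_k) : Prop :=
  X^T = X /\ forall x : 'cV[R]_k, x != 0 -> 0 < (x^T *m X *m x) 0 0.

Definition qf (k : nat) (X : 'M[R]_k) (x : 'cV[R]_k) : R := (x^T *m X *m x) 0 0.

Definition laplacian (N : nat) (adj : rel 'I_N) : 'M[R]_N :=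
  \matrix_(i, j) (if i == j then (#|[set k | adj i k]|)%:R else - (adj i j)%:R).

Definition undirected_graph (N : nat) (adj : rel 'I_N) : Prop :=
  symmetric adj /\ irreflexive adj.

Definition connected_graph (N : nat) (adj : rel 'I_N) : Prop :=
  forall i j, connect adj i j.

Definition kronI (a b n : nat) (X : 'M[R]_(a, b)) :
  'M[R]_(\sum_(i < a) n, \sum_(j < b) n) :=
  \mxblock_(i < a, j < b) ((X i j)%:M : 'M[R]_n).

Definition Ical (N n : nat) : 'M[R]_(\sum_(i < N) n, n) :=
  \mxcol_(i < N) (1%:M : 'M[R]_n).

Variables (N n : nat) (p mm : 'I_N -> nat).
Variables (A : 'M[R]_n) (B : forall i, 'M[R]_(n, p i)) (K : forall i, 'M[R]_(p i, n))
          (C : forall i, 'M[R]_(mm i, n)) (L : forall i, 'M[R]_(n, mm i)).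

Definition Bfull : 'M[R]_(n, \sum_i p i) := \mxrow_(i < N) B i.
Definition Kfull : 'M[R]_(\sum_i p i, n) := \mxcol_(i < N) K i.
Definition Cfull : 'M[R]_(\sum_i mm i, n) := \mxcol_(i < N) C i.
Definition Lfull : 'M[R]_(n, \sum_i mm i) := \mxrow_(i < N) L i.

Definition Abk : 'M[R]_n := A + Bfull *m Kfull.

Definition Jbar : 'M[R]_(\sum_(i < N) n, \sum_i mm i) :=
  N%:R *: \mxblock_(i < N, j < N) ((i == j)%:R *: L j).

Definition Fbar : 'M[R]_(\sum_(i < N) n, \sum_(j < N) n) :=
  \mxblock_(i < N, j < N)
    (if i == j then Abk - N%:R *: (L i *m C i) - B i *m K i
     else - (B j *m K j)).

Definition Hmat : 'M[R]_(n, \sum_(j < N) n) :=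
  \mxrow_(j < N) ((N%:R)^-1 *: Abk - B j *m K j - L j *m C j).

Variables (S : 'M[R]_(N, N.-1)) (Lam : 'M[R]_N.-1) (eta : R).

Definition SI := kronI n S.

Definition Ebar : 'M[R]_(\sum_(i < N) n, n + \sum_(j < N.-1) n) :=
  row_mx (Ical N n) SI.

Definition Aebar : 'M[R]_(n + \sum_(j < N.-1) n) :=
  block_mx (A - Lfull *m Cfull) (Hmat *m SI)
           (SI^T *m Fbar *m Ical N n) (SI^T *m Fbar *m SI - eta *: kronI n Lam).

Definition Wbar : 'M[R]_(n + \sum_(j < N.-1) n, n) :=
  col_mx 1%:M (SI^T *m Ical N n).

Definition Vbar : 'M[R]_(n + \sum_(j < N.-1) n, \sum_i mm i) :=
  col_mx Lfull (SI^T *m Jbar).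

Variables (Pbar : 'M[R]_(\sum_(i < N) n)) (Q : 'M[R]_n) (Rw : 'M[R]_(\sum_i mm i))
          (gamma alpha3 : R).

Definition Mmat := Ebar^T *m Pbar *m Ebar.

Definition LMI : 'M[R]_((n + \sum_(j < N.-1) n) + (n + \sum_i mm i)) :=
  block_mx ((gamma - 2 * alpha3) *: Mmat - Aebar^T *m Mmat - Mmat *m Aebar)
           (row_mx (- (Mmat *m Wbar)) (Mmat *m Vbar))
           (col_mx (- (Wbar^T *m Mmat)) (Vbar^T *m Mmat))
           (block_mx (alpha3 *: Q) 0 0 (alpha3 *: Rw)).

End Defs.

(* Main.v *)
Require Import Defs.
From HB Require Import structures.
From mathcomp Require Import all_boot all_order all_algebra.
From mathcomp Require Import ring lra.
Import Order.TTheory GRing.Theory Num.Theory.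
Local Open Scope ring_scope.

Section Kron.
Variable R : realFieldType.
Variable n : nat.

Lemma kronI_mul a b c (X : 'M[R]_(a,b)) (Y : 'M[R]_(b,c)) :
  kronI n X *m kronI n Y = kronI n (X *m Y).
Proof.
rewrite /kronI mul_mxblock; apply: eq_mxblock => i k.
rewrite mxE raddf_sum /=; apply: eq_bigr => j _.
by rewrite mul_scalar_mx scale_scalar_mx.
Qed.

Lemma kronI_tr a b (X : 'M[R]_(a,b)) : (kronI n X)^T = kronI n X^T.
Proof. by rewrite /kronI tr_mxblock; apply: eq_mxblock => i j; rewrite tr_scalar_mx mxE. Qed.

Lemma kronI_D a b (X Y : 'M[R]_(a,b)) : kronI n (X + Y) = kronI n X + kronI n Y.
Proof. by apply/matrixP => s t; rewrite !mxE mulrnDl. Qed.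

Lemma kronI_Z a b c (X : 'M[R]_(a,b)) : kronI n (c *: X) = c *: kronI n X.
Proof. by apply/matrixP => s t; rewrite !mxE mulrnAr. Qed.

Lemma kronI_N a b (X : 'M[R]_(a,b)) : kronI n (- X) = - kronI n X.
Proof. by apply/matrixP => s t; rewrite !mxE mulNrn. Qed.

Lemma kronI1 a : kronI n (1%:M : 'M[R]_a) = 1%:M.
Proof.
rewrite -(mxdiagZ (p_ := fun _ : 'I_a => n) 1) /kronI /mxdiag.
apply: eq_mxblock => i j; rewrite mxE; case: (i == j).
  by rewrite conform_mx_id.
by rewrite raddf0.
Qed.

Lemma Ical_tr N : (Ical R N n)^T = \mxrow_(i < N) (1%:M : 'M[R]_n).
Proof. by rewrite /Ical tr_mxcol; apply: eq_mxrow => i; rewrite tr_scalar_mx. Qed.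

Lemma Ical_Ical_tr N : Ical R N n *m (Ical R N n)^T = kronI n (const_mx 1 : 'M[R]_N).
Proof.
rewrite Ical_tr /Ical mul_mxcol_mxrow /kronI; apply: eq_mxblock => i j.
by rewrite mul1mx mxE.
Qed.

Lemma Ical_tr_Ical N : (Ical R N n)^T *m Ical R N n = N%:R *: (1%:M : 'M[R]_n).
Proof.
rewrite Ical_tr /Ical mul_mxrow_mxcol scaler_nat.
under eq_bigr do rewrite mul1mx.
by rewrite sumr_const card_ord.
Qed.

Lemma Ical_tr_kron N b (X : 'M[R]_(N, b)) :
  (Ical R N n)^T *m kronI n X = \mxrow_j ((\sum_i X i j)%:M : 'M[R]_n).
Proof.
rewrite Ical_tr /kronI mul_mxrow_mxblock; apply: eq_mxrow => j.
by rewrite raddf_sum; apply: eq_bigr => i _; rewrite mul1mx.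
Qed.

Lemma kron_Ical N a (X : 'M[R]_(a, N)) :
  kronI n X *m Ical R N n = \mxcol_i ((\sum_j X i j)%:M : 'M[R]_n).
Proof.
rewrite /Ical /kronI mul_mxblock_mxrow; apply: eq_mxcol => i.
by rewrite raddf_sum; apply: eq_bigr => j _; rewrite mulmx1.
Qed.

End Kron.

Section Lap.
Variable R : realFieldType.
Variables (N : nat) (adj : rel 'I_N).
Hypothesis Hund : undirected_graph adj.

Let deg i : R := \sum_k (adj i k)%:R.

Lemma lapE i j : laplacian R adj i j = (i == j)%:R * deg i - (adj i j)%:R.
Proof.
have [Hs Hirr] := Hund.
rewrite mxE; case: eqP => [<-|_]; last by rewrite mul0r sub0r.
rewrite Hirr subr0 mul1r /deg -natr_sum; congr (_%:R).
rewrite cardsE -sum1_card big_mkcond /=; apply: eq_bigr => k _.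
rewrite -topredE /=; by case: (adj i k).
Qed.

Lemma lap_row i : \sum_j laplacian R adj i j = 0.
Proof.
under eq_bigr do rewrite lapE.
rewrite sumrB (bigD1 i) //= eqxx mul1r big1 ?addr0 ?subrr //.
by move=> j /negbTE; rewrite eq_sym => ->; rewrite mul0r.
Qed.

Lemma lap_col j : \sum_i laplacian R adj i j = 0.
Proof.
have [Hs Hirr] := Hund.
under eq_bigr do rewrite lapE.
rewrite sumrB (bigD1 j) //= eqxx mul1r big1 ?addr0.
  by rewrite /deg; under eq_bigr do rewrite Hs; rewrite subrr.
by move=> i /negbTE ->; rewrite mul0r.
Qed.
End Lap.

Lemma SST (R : realFieldType) (N : nat) (S : 'M[R]_(N, N.-1)) :
  (0 < N)%N ->
  (const_mx 1 : 'rV[R]_N) *m S = 0 -> S^T *m S = 1%:M ->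
  S *m S^T = 1%:M - N%:R^-1 *: const_mx 1.
Proof.
move=> N0 H1 H2.
have NR : (N%:R : R) != 0 by rewrite pnatr_eq0 -lt0n.
set c := (const_mx 1 : 'rV[R]_N).
set U := col_mx c S^T.
have ccT : c *m c^T = (N%:R)%:M.
  apply/matrixP => i j; rewrite !mxE (ord1 i) (ord1 j) /=.
  under eq_bigr do rewrite !mxE mulr1.
  by rewrite sumr_const card_ord mulr1n.
have UUt : U *m U^T = block_mx ((N%:R)%:M : 'M[R]_1) 0 0 1%:M.
  rewrite /U tr_col_mx mul_col_row trmxK H2 ccT H1 -trmx_mul H1 trmx0 //.
set D := block_mx ((N%:R^-1)%:M : 'M[R]_1) 0 0 (1%:M : 'M[R]_N.-1).
have DU : D *m U *m U^T = 1%:M.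
  rewrite -mulmxA UUt /D mulmx_block !mulmx0 !mul0mx !addr0 !add0r mulmx1.
  by rewrite -scalar_mxM mulVf // scalar_mx_block.
have rU : row_full U.
  rewrite /row_full eqn_leq rank_leq_col /=.
  have h1 : (1 + N.-1 <= \rank U)%N.
    apply: leq_trans (_ : \rank (1%:M : 'M[R]_(1 + N.-1)) <= _)%N; first by rewrite mxrank1.
    rewrite -DU.
    apply: leq_trans (mxrankM_maxl _ _) _.
    exact: mxrankM_maxr.
  apply: leq_trans h1; by rewrite add1n prednK.
have [B HB] := row_fullP rU.
set X := 1%:M - N%:R^-1 *: const_mx 1 - S *m S^T.
have UX : U *m X = 0.
  rewrite /U mul_col_mx /X !mulmxBr !mulmx1 -!scalemxAr mulmxA H1 mul0mx subr0.
  rewrite mulmxA H2 mul1mx addrAC subrr add0r.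
  have -> : c *m const_mx 1 = N%:R *: c.
    apply/matrixP => i j; rewrite !mxE.
    under eq_bigr do rewrite !mxE mulr1.
    by rewrite sumr_const card_ord mulr1 -mulr_natl mulr1 ?mulr1n.
  have -> : S^T *m (const_mx 1 : 'M[R]_N) = 0.
    have -> : (const_mx 1 : 'M[R]_N) = c^T *m c.
      apply/matrixP => i j; rewrite !mxE big_ord1 !mxE mulr1 //.
    by rewrite mulmxA -trmx_mul H1 trmx0 mul0mx.
  by rewrite scalerA mulVf // scale1r scaler0 subrr oppr0 col_mx0.
have X0 : X = 0 by rewrite -[X]mul1mx -HB -mulmxA UX mulmx0.
by apply/eqP; rewrite eq_sym -subr_eq0 -/X X0.
Qed.

Lemma scale_mxrow (R : realFieldType) (N m : nat) (q : 'I_N -> nat)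
  (c : R) (X : forall j, 'M[R]_(m, q j)) :
  c *: \mxrow_j X j = \mxrow_j (c *: X j).
Proof. by apply/matrixP => a b; rewrite !mxE. Qed.

Section Main.
Variable R : realFieldType.
Variables (N n : nat) (p mm : 'I_N -> nat).
Variables (A : 'M[R]_n) (B : forall i, 'M[R]_(n, p i)) (K : forall i, 'M[R]_(p i, n))
          (C : forall i, 'M[R]_(mm i, n)) (L : forall i, 'M[R]_(n, mm i)).
Variables (adj : rel 'I_N) (S : 'M[R]_(N, N.-1)) (Lam : 'M[R]_N.-1) (eta : R).
Hypothesis N0 : (0 < N)%N.
Hypothesis Hund : undirected_graph adj.
Hypothesis H1 : (const_mx 1 : 'rV[R]_N) *m S = 0.
Hypothesis H2 : S^T *m S = 1%:M.
Hypothesis HLam : S^T *m laplacian R adj *m S = Lam.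

Let NR : (N%:R : R) != 0.
Proof. by rewrite pnatr_eq0 -lt0n. Qed.

Let hN : (N.-1%:R : R) + 1 = N%:R.
Proof. by rewrite natr1 prednK. Qed.

Definition Einv : 'M[R]_(n + \sum_(j < N.-1) n, \sum_(i < N) n) :=
  col_mx (N%:R^-1 *: (Ical R N n)^T) (kronI n S)^T.

Lemma E1 : Ebar n S *m Einv = 1%:M.
Proof.
rewrite /Ebar /Einv mul_row_col -scalemxAr Ical_Ical_tr /SI kronI_tr kronI_mul.
by rewrite SST // -kronI_Z -kronI_D addrC subrK kronI1.
Qed.

Lemma E2 : Einv *m Ical R N n = Wbar n S.
Proof.
by rewrite /Einv /Wbar mul_col_mx -scalemxAl Ical_tr_Ical scalerA mulVf // scale1r.
Qed.

Lemma E3 : Einv *m Jbar L = Vbar L S.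
Proof.
rewrite /Einv /Vbar mul_col_mx -scalemxAl /Jbar -scalemxAr scalerA mulVf // scale1r.
rewrite Ical_tr mul_mxrow_mxblock /Lfull; congr col_mx; apply: eq_mxrow => j.
under eq_bigr do rewrite mul1mx.
rewrite (bigD1 j) //= eqxx scale1r big1 ?addr0 //.
by move=> i /negbTE ->; rewrite scale0r.
Qed.

Lemma F1 : (Ical R N n)^T *m Fbar A B K C L = N%:R *: Hmat A B K C L.
Proof.
rewrite Ical_tr /Fbar mul_mxrow_mxblock /Hmat scale_mxrow; apply: eq_mxrow => j.
under eq_bigr do rewrite mul1mx.
rewrite (bigD1 j) //= eqxx.
rewrite (eq_bigr (fun=> - (B j *m K j))); last by move=> i /negbTE ->.
rewrite sumr_const cardC1 card_ord -scaler_nat.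
apply/matrixP => a b; rewrite !mxE -hN.
field.
by rewrite hN.
Qed.

Lemma F2 : (Ical R N n)^T *m kronI n (laplacian R adj) = 0.
Proof.
rewrite Ical_tr_kron; apply/matrixP => a b; rewrite !mxE lap_col //.
by rewrite mul0rn.
Qed.

Lemma F3 : kronI n (laplacian R adj) *m Ical R N n = 0.
Proof.
rewrite kron_Ical; apply/matrixP => a b; rewrite !mxE lap_row //.
by rewrite mul0rn.
Qed.

Lemma F4 : Hmat A B K C L *m Ical R N n = A - Lfull L *m Cfull C.
Proof.
rewrite /Hmat /Ical mul_mxrow_mxcol.
rewrite (eq_bigr (fun j => N%:R^-1 *: Abk A B K - B j *m K j - L j *m C j)); last by move=> j _; rewrite mulmx1.
rewrite !sumrB sumr_const card_ord -scaler_nat /Abk /Lfull /Cfull /Bfull /Kfull.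
rewrite !mul_mxrow_mxcol scalerA mulfV // scale1r.
by rewrite addrK.
Qed.

Lemma E4 : Einv *m (Fbar A B K C L - eta *: kronI n (laplacian R adj)) *m Ebar n S
  = Aebar A B K C L S Lam eta.
Proof.
rewrite /Einv /Ebar /Aebar mul_col_mx mul_col_row.
rewrite -!scalemxAl !mulmxBr F1 -!scalemxAr F2 scaler0 subr0.
rewrite -!scalemxAl !scalerA mulVf // !scale1r F4 !mulmxBl -!scalemxAl -!mulmxA F3 mulmx0 scaler0 subr0.
rewrite /SI kronI_tr !mulmxA kronI_mul kronI_mul HLam.
by [].
Qed.

End Main.

Lemma e00D (R : realFieldType) (X Y : 'M[R]_1) : (X + Y) 0 0 = X 0 0 + Y 0 0.
Proof. by rewrite mxE. Qed.
Lemma e00N (R : realFieldType) (X : 'M[R]_1) : (- X) 0 0 = - X 0 0.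
Proof. by rewrite mxE. Qed.
Lemma e00Z (R : realFieldType) c (X : 'M[R]_1) : (c *: X) 0 0 = c * X 0 0.
Proof. by rewrite mxE. Qed.
Lemma e000 (R : realFieldType) : (0 : 'M[R]_1) 0 0 = 0.
Proof. by rewrite mxE. Qed.

Lemma trD (R : realFieldType) a b (X Y : 'M[R]_(a,b)) : (X + Y)^T = X^T + Y^T.
Proof. by apply/matrixP => i j; rewrite !mxE. Qed.
Lemma trN (R : realFieldType) a b (X : 'M[R]_(a,b)) : (- X)^T = - X^T.
Proof. by apply/matrixP => i j; rewrite !mxE. Qed.

Theorem lemma5 (R : realFieldType) (N n : nat) (p mm : 'I_N -> nat)
  (A : 'M[R]_n) (B : forall i, 'M[R]_(n, p i)) (K : forall i, 'M[R]_(p i, n))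
  (C : forall i, 'M[R]_(mm i, n)) (L : forall i, 'M[R]_(n, mm i))
  (adj : rel 'I_N) (S : 'M[R]_(N, N.-1)) (Lam : 'M[R]_N.-1)
  (eta gamma : R)
  (Pbar : 'M[R]_(\sum_(i < N) n)) (Q : 'M[R]_n) (Rw : 'M[R]_(\sum_i mm i)) :
  (2 <= N)%N ->
  undirected_graph adj -> connected_graph adj ->
  0 <= eta ->
  posdef Pbar -> posdef Q -> posdef Rw ->
  (const_mx 1 : 'rV[R]_N) *m S = 0 ->
  S^T *m S = 1%:M ->
  S^T *m laplacian R adj *m S = Lam ->
  is_diag_mx Lam ->
  (forall k, 0 < Lam k k /\ eigenvalue (laplacian R adj) (Lam k k)) ->
  (exists alpha3 : R, 0 <= alpha3 /\
     posdef (LMI A B K C L S Lam eta Pbar Q Rw gamma alpha3)) ->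
  forall (e : 'cV[R]_(\sum_(i < N) n)) (w : 'cV[R]_n) (v : 'cV[R]_(\sum_i mm i)),
    qf Q w <= 1 -> qf Rw v <= 1 -> 1 <= qf Pbar e ->
    let edot := (Fbar A B K C L - eta *: kronI n (laplacian R adj)) *m e
                + Ical R N n *m w - Jbar L *m v in
    (edot^T *m Pbar *m e + e^T *m Pbar *m edot) 0 0 < gamma * qf Pbar e.
Proof.
move=> N2 Hund _ _ _ _ _ H1 H2 HLam _ _ [al [al0 [_ LMIpos]]] e w v qw qv qe.
cbv zeta.
have N0 : (0 < N)%N by apply: leq_trans N2.
set E := Ebar n S.
set Ei := Einv R N n S.
set z := Ei *m e.
have ez : e = E *m z by rewrite /z mulmxA E1 // mul1mx.
have Fe : (Fbar A B K C L - eta *: kronI n (laplacian R adj)) *m E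
          = E *m Aebar A B K C L S Lam eta.
  by rewrite -(E4 _ _ _ _ _ _ _ _ _ _ _ _ _ _ N0 Hund HLam) !mulmxA E1 // mul1mx.
have Ie : Ical R N n = E *m Wbar n S by rewrite -(E2 _ _ _ _ N0) mulmxA E1 // mul1mx.
have Je : Jbar L = E *m Vbar L S by rewrite -(E3 _ _ _ _ _ _ N0) mulmxA E1 // mul1mx.
set g := Aebar A B K C L S Lam eta *m z + Wbar n S *m w - Vbar L S *m v.
have edotE : (Fbar A B K C L - eta *: kronI n (laplacian R adj)) *m e
                + Ical R N n *m w - Jbar L *m v = E *m g.
  by rewrite /g {1}ez mulmxA Fe Ie Je mulmxBr mulmxDr !mulmxA.
have k1 : forall a b : 'cV[R]_(n + \sum_(j < N.-1) n), (E *m a)^T *m Pbar *m (E *m b) = a^T *m Mmat S Pbar *m b.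
  by move=> a b; rewrite trmx_mul /Mmat !mulmxA.
move: qe; rewrite /qf edotE ez !k1 => qe.
set x := col_mx z (col_mx w v).
have xn0 : x != 0.
  rewrite /x col_mx_eq0; apply/nandP; left; apply/negP => /eqP z0.
  by move: qe; rewrite z0 mulmx0 mxE ler10.
have xT : x^T = row_mx z^T (row_mx w^T v^T) by rewrite /x !tr_col_mx.
have := LMIpos x xn0.
rewrite xT /x /LMI.
rewrite !(mul_row_block, mul_row_col, mul_mx_row, add_row_mx, mulmx0, mul0mx, addr0, add0r).
move=> hL.
move: hL qe qw qv; rewrite /qf /g.
rewrite !(trD, trN, trmx_mul).
rewrite !(mulmxDl, mulmxDr, mulmxBl, mulmxBr, mulmxN, mulNmx).
do 4 rewrite -?scalemxAl -?scalemxAr ?mulmxA.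
rewrite !(e00D, e00N, e00Z).
move=> hL qe qw qv.
have := qe; rewrite -subr_ge0 => /(mulr_ge0 al0) h1.
have := qw; rewrite -subr_ge0 => /(mulr_ge0 al0) h2.
have := qv; rewrite -subr_ge0 => /(mulr_ge0 al0) h3.
lra.
Qed.
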